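(* Let $(A,B)$ be a Katsura pair. Then the KEP-action $(G_B,E_A)$ is contracting if and only if $(G_{B,\infty},E_{A_\infty})$ is contracting.
   Context: Katsura pair: $N\in\mathbb{N}$, $A\in M_N(\mathbb{N})$ (nonnegative integers), $B\in M_N(\mathbb{Z})$ with $A_{ij}=0\Rightarrow B_{ij}=0$. Graph $E_A$: vertices $\{1,\dots,N\}$, edges $e_{i,j,m}$ ($0\le m<A_{ij}$), $r=i$, $s=j$; $B_e=B_{r(e)s(e)}$. The group bundle $\mathbb{Z}\times E_A^0$ (elements $a_i^k$) acts by $a_i^k\cdot e_{i,j,m}=e_{i,j,\hat m}$, $a_i^k|_{e_{i,j,m}}=a_j^{\hat k}$ with $kB_{ij}+m=\hat kA_{ij}+\hat m$, $0\le\hat m<A_{ij}$, extended recursively to finite paths via $g\cdot(e\nu)=(g\cdot e)(g|_e\cdot\nu)$, $g|_{e\nu}=(g|_e)|_\nu$. $G_B$ is the faithful quotient; $(G_B,E_A)$ is the KEP-action; $(G_B)_i$ its isotropy group at $i$. Infinite part: $E^0_{A,\infty}=\{i:(G_B)_i\text{ infinite}\}$ (then $(G_B)_i=\mathbb{Z}$); $E_{A,\infty}=E_{A_\infty}$ is the subgraph of $E_A$ with vertices $E^0_{A,\infty}$ and edges $\{e:s(e)\in E^0_{A,\infty},B_e\ne0\}$ (its adjacency matrix is $A_\infty$). $G_{B,\infty}=\{g\in G_B: d(g)\in E^0_{A,\infty}\}=\mathbb{Z}\times E^0_{A,\infty}$, and the KEP formulas restrict to an action-restriction pair (possibly non-faithful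 action with restrictions) $(G_{B,\infty},E_{A_\infty})$. Contracting (for a groupoid $G$ with an action-restriction pair on a finite graph $E$): there is a finite $F\subseteq G$ such that for every $g\in G$ there is $n\ge0$ with $g|_\mu\in F$ for all paths $\mu\in d(g)E^k$, $k\ge n$. *)

(* Defs.v *)
From mathcomp Require Import all_boot all_order all_algebra.
Set Implicit Arguments. Unset Strict Implicit. Unset Printing Implicit Defensive.
Import Order.TTheory GRing.Theory Num.Theory.
Local Open Scope ring_scope.

(* Edge e_{i,j,m} of E_A : range r = i, source s = j, label m. *)
Record edge (N : nat) := Edge { e_r : 'I_N; e_s : 'I_N; e_m : nat }.
Arguments Edge {N}.

Section Katsura.
Variable N : nat.
Variables (A : 'M[nat]_N) (B : 'M[int]_N).

Definition katsura_pair : Prop := forall i j, A i j = 0%N -> B i j = 0.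

Definition is_edge (e : edge N) : Prop := (e_m e < A (e_r e) (e_s e))%N.

(* p is a finite path (concatenation e1 e2 ... with s(e_l) = r(e_{l+1}))
   with range r(p) = v, all of whose edges satisfy the edge predicate P.
   The empty path is the vertex v. *)
Fixpoint path_from (P : edge N -> Prop) (v : 'I_N) (p : seq (edge N)) : Prop :=
  match p with
  | [::] => True
  | e :: p' => [/\ P e, e_r e = v & path_from P (e_s e) p']
  end.

Definition end_vertex (v : 'I_N) (p : seq (edge N)) : 'I_N := last v (map (@e_s N) p).

(* a_i^k . e_{i,j,m} = e_{i,j,mh},  a_i^k|_{e_{i,j,m}} = a_j^{kh},
   where k B_ij + m = kh A_ij + mh, 0 <= mh < A_ij. *)
Definition act_edge (k : int) (e : edge N) : edge N * int :=
  let t := k * B (e_r e) (e_s e) + (e_m e)%:Z in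
  let a := (A (e_r e) (e_s e))%:Z in
  (Edge (e_r e) (e_s e) `|(t %% a)%Z|%N, (t %/ a)%Z).

Fixpoint act (k : int) (p : seq (edge N)) : seq (edge N) :=
  match p with
  | [::] => [::]
  | e :: p' => (act_edge k e).1 :: act (act_edge k e).2 p'
  end.

(* a_i^k|_{e nu} = (a_i^k|_e)|_nu ; the exponent of the restriction
   (the restriction lives at the vertex end_vertex i p) *)
Fixpoint res (k : int) (p : seq (edge N)) : int :=
  match p with
  | [::] => k
  | e :: p' => res (act_edge k e).2 p'
  end.

(* Faithful quotient: a_i^k and a_i^l define the same element of G_B iff
   they act identically on all finite paths in i E_A^*. *)
Definition kequiv (i : 'I_N) (k l : int) : Prop :=
  forall p, path_from is_edge i p -> act k p = act l p.

(* (G_B)_i is infinite: no finite set of exponents represents all classes. *)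
Definition infinite_vertex (i : 'I_N) : Prop :=
  ~ exists F : seq int, forall k : int, exists2 l, l \in F & kequiv i k l.

(* Contracting KEP-action (G_B, E_A); elements of G_B are represented by
   pairs (i, k) = a_i^k, up to kequiv. *)
Definition contracting_GB : Prop :=
  exists F : seq ('I_N * int),
    forall (i : 'I_N) (k : int), exists n : nat,
      forall p, path_from is_edge i p -> (n <= size p)%N ->
        exists2 f, f \in F &
          f.1 = end_vertex i p /\ kequiv f.1 f.2 (res k p).

(* Edges of E_{A_infty}: edges e of E_A with s(e) in E^0_{A,infty}, B_e <> 0
   (and r(e) in E^0_{A,infty}, so that it is a subgraph on E^0_{A,infty}). *)
Definition inf_edge (e : edge N) : Prop :=
  [/\ is_edge e, infinite_vertex (e_r e), infinite_vertex (e_s e)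
    & B (e_r e) (e_s e) != 0].

(* Contracting action-restriction pair (G_{B,infty}, E_{A_infty}), with
   G_{B,infty} = Z x E^0_{A,infty} (pairs (i,k) with i infinite). *)
Definition contracting_Ginf : Prop :=
  exists F : seq ('I_N * int),
    (forall f, f \in F -> infinite_vertex f.1) /\
    forall (i : 'I_N) (k : int), infinite_vertex i -> exists n : nat,
      forall p, path_from inf_edge i p -> (n <= size p)%N ->
        (end_vertex i p, res k p) \in F.

End Katsura.

(* Main.v *)
Require Import Defs.
From mathcomp Require Import all_boot all_order all_algebra.
From mathcomp Require Import zify ring lra.
From Stdlib Require Import Classical.
Set Implicit Arguments. Unset Strict Implicit. Unset Printing Implicit Defensive.
Import Order.TTheory GRing.Theory Num.Theory.
Local Open Scope ring_scope.

Section S.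
Variable N : nat.
Variables (A : 'M[nat]_N) (B : 'M[int]_N).

Lemma act_edge_comp k l (e : edge N) : is_edge A e ->
  let e' := (act_edge A B l e).1 in
  (act_edge A B k e').1 = (act_edge A B (k + l) e).1 /\
  (act_edge A B (k + l) e).2 = (act_edge A B l e).2 + (act_edge A B k e').2.
Proof.
case: e => r s m; rewrite /is_edge /act_edge /= => Hm.
set a := (A r s)%:Z; set b := B r s.
have a0 : a != 0 by rewrite /a; apply/eqP; case=> H; rewrite H in Hm.
have age0 : 0 <= ((l * b + m%:Z) %% a)%Z by exact: modz_ge0.
rewrite gez0_abs //.
have E : (k + l) * b + m%:Z = divz (l * b + m%:Z) a * a + (k * b + modz (l * b + m%:Z) a).
  have H := divz_eq (l * b + m%:Z) a.
  set x := divz _ a in H *; set y := modz _ a in H *.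
  by rewrite mulrDl -addrA H; ring.
rewrite E modzMDl divzMDl //.
Qed.

Lemma act_path k v p : path_from (is_edge A) v p -> path_from (is_edge A) v (act A B k p).
Proof.
elim: p k v => [//|e p IH] k v /= [He Hr Hp]; split => //.
- move: He; rewrite /is_edge /act_edge /=.
  set a := (A (e_r e) (e_s e))%:Z => Hm.
  have a0 : a != 0 by rewrite /a; apply/eqP; case=> H; rewrite H in Hm.
  have : ((k * B (e_r e) (e_s e) + (e_m e)%:Z) %% a)%Z < a.
    by apply: ltz_pmod; rewrite /a ltz_nat (leq_ltn_trans _ Hm).
  have := modz_ge0 (k * B (e_r e) (e_s e) + (e_m e)%:Z) a0.
  move=> H0 H1; rewrite -ltz_nat gez0_abs //.
- by apply: IH.
Qed.

Lemma act0 v p : path_from (is_edge A) v p -> act A B 0 p = p.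
Proof.
elim: p v => [//|e p IH] v [He Hr Hp].
change ((act_edge A B 0 e).1 :: act A B (act_edge A B 0 e).2 p = e :: p).
have -> : act_edge A B 0 e = (e, 0).
  case: e He {Hr Hp} => r s m; rewrite /is_edge /act_edge /= => Hm.
  rewrite mul0r add0r modz_small ?divz_small ?ltz_nat ?lez_nat //=.
by rewrite /= (IH _ Hp).
Qed.

Lemma actD k l v p : path_from (is_edge A) v p ->
  act A B (k + l) p = act A B k (act A B l p).
Proof.
elim: p k l v => [//|e p IH] k l v [He Hr Hp].
change ((act_edge A B (k + l) e).1 :: act A B (act_edge A B (k + l) e).2 p =
  (act_edge A B k (act_edge A B l e).1).1 :: act A B (act_edge A B k (act_edge A B l e).1).2
   (act A B (act_edge A B l e).2 p)).
have [E1 E2] := act_edge_comp k l He.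
by rewrite E1 E2 [X in act _ _ X p]addrC (IH _ _ _ Hp).
Qed.


Lemma kequiv_refl v k : kequiv A B v k k.
Proof. by []. Qed.

Lemma kequiv_sym v k l : kequiv A B v k l -> kequiv A B v l k.
Proof. by move=> H p Hp; rewrite H. Qed.

Lemma kequiv_trans v k l m : kequiv A B v k l -> kequiv A B v l m -> kequiv A B v k m.
Proof. by move=> H1 H2 p Hp; rewrite H1 // H2. Qed.

Lemma kequiv_sub v k l : kequiv A B v k l -> kequiv A B v (k - l) 0.
Proof.
move=> H p Hp; rewrite (act0 Hp) addrC (actD _ _ Hp) H // -(actD _ _ Hp).
by rewrite addNr (act0 Hp).
Qed.

Lemma kequiv_addk v x d : kequiv A B v d 0 -> kequiv A B v (x + d) x.
Proof. by move=> H p Hp; rewrite (actD _ _ Hp) H // (act0 Hp). Qed.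

Lemma kequiv_neg v d : kequiv A B v d 0 -> kequiv A B v (- d) 0.
Proof.
move=> H p Hp; rewrite (act0 Hp).
have E : act A B d p = p by rewrite H // (act0 Hp).
by rewrite -{1}E -(actD _ _ Hp) addNr (act0 Hp).
Qed.

Lemma kequiv_muln v d (n : nat) : kequiv A B v d 0 -> kequiv A B v (n%:Z * d) 0.
Proof.
move=> H; elim: n => [|n IH]; first by rewrite mul0r.
move=> p Hp; rewrite -addn1 PoszD mulrDl mul1r addrC (actD _ _ Hp) IH //.
by rewrite (act0 Hp) H // (act0 Hp).
Qed.

Lemma kequiv_mul v d q : kequiv A B v d 0 -> kequiv A B v (q * d) 0.
Proof.
move=> H; case: q => n; first exact: kequiv_muln.
by rewrite NegzE mulNr; apply: kequiv_neg; apply: kequiv_muln.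
Qed.

Lemma inf_kequiv v a b : infinite_vertex A B v -> kequiv A B v a b -> a = b.
Proof.
move=> Hinf H; apply/eqP; apply/negPn/negP => Hab; apply: Hinf.
set d := a - b.
have d0 : d != 0 by rewrite subr_eq0.
have Hd : kequiv A B v d 0 by apply: kequiv_sub.
exists [seq n%:Z | n <- iota 0 `|d|%N] => k.
exists (modz k d).
  apply/mapP; exists `|modz k d|%N; last by rewrite gez0_abs // modz_ge0.
  rewrite mem_iota add0n /= -ltz_nat gez0_abs ?modz_ge0 //.
  by rewrite abszE; apply: ltz_mod.
rewrite {1}(divz_eq k d) addrC; apply: kequiv_addk; exact: kequiv_mul.
Qed.


Lemma restr_kequiv v k l e : kequiv A B v k l -> is_edge A e -> e_r e = v ->
  kequiv A B (e_s e) (act_edge A B k e).2 (act_edge A B l e).2.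
Proof.
move=> H He Hr p Hp.
have := H (e :: p) (And3 He Hr Hp).
by case.
Qed.

Lemma path_mono (P Q : edge N -> Prop) v p : (forall e, P e -> Q e) ->
  path_from P v p -> path_from Q v p.
Proof.
move=> PQ; elim: p v => [//|e p IH] v [He Hr Hp]; split => //; [exact: PQ | exact: IH].
Qed.

Lemma end_cons (v : 'I_N) e p : end_vertex v (e :: p) = end_vertex (e_s e) p.
Proof. by []. Qed.

Lemma inf_end v p : infinite_vertex A B v -> path_from (inf_edge A B) v p ->
  infinite_vertex A B (end_vertex v p).
Proof.
elim: p v => [//|e p IH] v Hv [[He Hir His Hb] Hr Hp].
exact: (IH _ His Hp).
Qed.

Lemma sum_bound (S : seq int) x : x \in S -> (`|x| <= \sum_(y <- S) `|y|)%N.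
Proof.
elim: S => [//|y S IH]; rewrite in_cons big_cons => /orP [/eqP ->|/IH]; first exact: leq_addr.
move=> h; exact: (leq_trans h (leq_addl _ _)).
Qed.

Lemma finite_edge_B v e : ~ infinite_vertex A B v -> infinite_vertex A B (e_s e) ->
  is_edge A e -> e_r e = v -> B v (e_s e) = 0.
Proof.
move=> Hv Hs He Hr.
have [F HF] : exists F : seq int, forall k : int, exists2 l, l \in F & kequiv A B v k l.
  by apply: Classical_Prop.NNPP.
set s := e_s e.
set a := (A v s)%:Z; set b := B v s.
have Apos : (0 < A v s)%N by rewrite /s -Hr; exact: (leq_ltn_trans _ He).
have e0 : is_edge A (Edge v s 0) by [].
have a0 : a != 0 by rewrite /a; apply/eqP; case=> H; rewrite H in Apos.
set S := [seq divz (l * b) a | l <- F].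
have HS : forall c : int, c * b \in S.
  move=> c; have [l lF Hl] := HF (c * a).
  have := inf_kequiv Hs (restr_kequiv Hl e0 erefl).
  rewrite /act_edge /= !addr0 -/a -/b => E.
  have -> : c * b = divz (c * a * b) a by rewrite mulrAC mulzK.
  by rewrite E; apply/mapP; exists l.
apply/eqP; apply/negPn/negP => b0.
set M := (\sum_(y <- S) `|y|)%N.
have := sum_bound (HS (M.+1)%:Z).
rewrite abszM /= -[X in (_ <= X)%N]/M.
have : (0 < `|b|)%N by rewrite absz_gt0.
move=> h1 h2; have := leq_trans (leq_pmulr M.+1 h1) h2. by rewrite ltnn.
Qed.

Definition good (v : 'I_N) (k : int) := ~ infinite_vertex A B v \/ k = 0.

Lemma good_step v k e : good v k -> is_edge A e -> e_r e = v ->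
  good (e_s e) (act_edge A B k e).2.
Proof.
move=> Hg He Hr.
have zero : forall k', B v (e_s e) = 0 \/ k' = 0 -> (act_edge A B k' e).2 = 0.
  move=> k' Hk'; rewrite /act_edge /= Hr.
  have -> : k' * B v (e_s e) = 0 by case: Hk' => ->; rewrite ?mulr0 ?mul0r.
  rewrite add0r divz_small //; apply/andP; split => //.
  by rewrite -Hr ltz_nat.
case: Hg => [Hv|->]; last by right; apply: zero; right.
case: (Classical_Prop.classic (infinite_vertex A B (e_s e))) => Hs; last by left.
by right; apply: zero; left; apply: finite_edge_B.
Qed.

Lemma good_path v k p : good v k -> path_from (is_edge A) v p ->
  good (end_vertex v p) (res A B k p).
Proof.
elim: p v k => [//|e p IH] v k Hg [He Hr Hp].
exact: (IH _ _ (good_step Hg He Hr) Hp).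
Qed.

Lemma noninf_step k e : is_edge A e -> ~ inf_edge A B e ->
  good (e_r e) k \/ good (e_s e) (act_edge A B k e).2.
Proof.
move=> He Hn.
case: (Classical_Prop.classic (infinite_vertex A B (e_r e))) => Hr; last by left; left.
right.
case: (Classical_Prop.classic (infinite_vertex A B (e_s e))) => Hs; last by left.
right; rewrite /act_edge /=.
have Hb : B (e_r e) (e_s e) = 0.
  by apply/eqP; apply/negPn/negP => hb; apply: Hn; split.
by rewrite Hb mulr0 add0r divz_small //; apply/andP; split => //; rewrite ltz_nat.
Qed.

Lemma key v k p : path_from (is_edge A) v p ->
  path_from (inf_edge A B) v p \/ good (end_vertex v p) (res A B k p).
Proof.
elim: p v k => [|e p IH] v k; first by left.
move=> [He Hr Hp].
case: (Classical_Prop.classic (inf_edge A B e)) => Hi.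
  case: (IH _ (act_edge A B k e).2 Hp) => [H|H]; last by right.
  by left; split.
right; apply: (good_path _ Hp).
by case: (noninf_step k He Hi) => // H; apply: good_step H He erefl.
Qed.


Lemma fin_reps : exists Ff : seq ('I_N * int), forall v, ~ infinite_vertex A B v ->
  forall k, exists2 l, (v, l) \in Ff & kequiv A B v l k.
Proof.
suff H : forall s : seq 'I_N, exists Ff : seq ('I_N * int), forall v, v \in s ->
  ~ infinite_vertex A B v -> forall k, exists2 l, (v, l) \in Ff & kequiv A B v l k.
  by have [Ff HF] := H (enum 'I_N); exists Ff => v; apply: HF; rewrite mem_enum.
elim => [|w s [Ff HF]]; first by exists [::].
case: (classic (infinite_vertex A B w)) => Hw.
  exists Ff => v; rewrite in_cons => /orP [/eqP -> //|]; exact: HF.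
have [Fw HFw] : exists F : seq int, forall k : int, exists2 l, l \in F & kequiv A B w k l.
  exact: NNPP.
exists ([seq (w, l) | l <- Fw] ++ Ff) => v; rewrite in_cons => /orP [/eqP ->|Hv] Hi k.
  have [l lF Hl] := HFw k; exists l; last exact: kequiv_sym.
  by rewrite mem_cat; apply/orP; left; apply/mapP; exists l.
have [l lF Hl] := HF v Hv Hi k; exists l => //.
by rewrite mem_cat lF orbT.
Qed.

Lemma good_rep (Ff : seq ('I_N * int)) (Fi : seq ('I_N * int)) :
  (forall v, ~ infinite_vertex A B v ->
    forall k, exists2 l, (v, l) \in Ff & kequiv A B v l k) ->
  forall v k, good v k -> exists2 f, f \in Ff ++ [seq (w, 0) | w <- enum 'I_N] ++ Fi &
    f.1 = v /\ kequiv A B f.1 f.2 k.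
Proof.
move=> HF v k [Hv|->].
  have [l lF Hl] := HF v Hv k; exists (v, l) => //.
  by rewrite mem_cat lF.
exists (v, 0) => //.
rewrite !mem_cat; apply/orP; right; apply/orP; left.
by apply/mapP; exists v; rewrite ?mem_enum.
Qed.

End S.

Lemma filter_prop (T : eqType) (s : seq T) (P : T -> Prop) :
  exists s' : seq T, forall x, x \in s' <-> x \in s /\ P x.
Proof.
elim: s => [|y s [s' Hs']]; first by exists [::] => x; split => // [[]].
case: (classic (P y)) => Py.
  exists (y :: s') => x; rewrite !in_cons; split.
    case/orP => [/eqP ->|/Hs' [xs Px]]; first by rewrite eqxx.
    by rewrite xs orbT.
  case=> /orP [/eqP ->|xs] Px; first by rewrite eqxx.
  by apply/orP; right; apply/Hs'.
exists s' => x; rewrite in_cons; split.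
  by case/Hs' => xs Px; rewrite xs orbT.
case=> /orP [/eqP ->|xs] Px //; exact/Hs'.
Qed.

Theorem proposition3p2 (N : nat) (A : 'M[nat]_N) (B : 'M[int]_N) :
  katsura_pair A B -> (contracting_GB A B <-> contracting_Ginf A B).
Proof.
move=> _; split.
- case=> F HF.
  have [F' HF'] := filter_prop F (fun f => infinite_vertex A B f.1).
  exists F'; split; first by move=> f /HF' [].
  move=> i k Hi; have [n Hn] := HF i k; exists n => p Hp Hs.
  have Hp' := path_mono (fun e (H : inf_edge A B e) => let: And4 h _ _ _ := H in h) Hp.
  have [f fF [E1 E2]] := Hn p Hp' Hs.
  have Hend := inf_end Hi Hp.
  rewrite -E1 in Hend.
  have E := inf_kequiv Hend E2.
  have -> : (end_vertex i p, res A B k p) = f by rewrite -E1 -E; case: f {fF E1 E2 Hend E}.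
  by apply/HF'.
- case=> Fi [HFi HF].
  have [Ff HFf] := fin_reps A B.
  exists (Ff ++ [seq (w, 0) | w <- enum 'I_N] ++ Fi) => i k.
  case: (classic (infinite_vertex A B i)) => Hi.
    have [n Hn] := HF i k Hi; exists n => p Hp Hs.
    case: (key B k Hp) => [Hip|Hg]; last exact: good_rep.
    exists (end_vertex i p, res A B k p) => //.
    by rewrite !mem_cat (Hn p Hip Hs) !orbT.
  exists 0%N => p Hp _; apply: good_rep => //.
  by apply: good_path Hp; left.
Qed.
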